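(* The trigonometric polynomial $f(\alpha,\beta,\gamma)=2^{3/2}-\cos(\alpha+\beta+\gamma)-\cos(-\alpha+\beta+\gamma)-\cos(\alpha-\beta+\gamma)+\cos(\alpha+\beta-\gamma)$ is extremal in the class $\sigma(1,1,1)$.
   Context: $\sigma(1,1,1)$ is the set of trigonometric polynomials $f(\alpha,\beta,\gamma)=\sum_{|k|,|\ell|,|m|\le1}q(k,\ell,m)e^{i(k\alpha+\ell\beta+m\gamma)}$ with $f(\alpha,\beta,\gamma)\ge0$ for all real $\alpha,\beta,\gamma$. An element $f$ of a convex cone $U$ is extremal in $U$ if whenever $f=g+h$ with $g,h\in U$, both $g$ and $h$ are nonnegative multiples of $f$. *)

(* Defs.v *)
From Stdlib Require Import Reals List ZArith.
From Coquelicot Require Import Coquelicot.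
Import ListNotations.
Open Scope R_scope.

Definition freqs1 : list Z := [(-1)%Z; 0%Z; 1%Z].
Definition triples111 : list (Z * Z * Z) :=
  flat_map (fun k => flat_map (fun l => map (fun m => (k, l, m)) freqs1) freqs1) freqs1.

Definition cexpi (t : R) : C := (cos t, sin t).

Definition trig_poly111 (q : Z -> Z -> Z -> C) (a b g : R) : C :=
  fold_right Cplus (RtoC 0)
    (map (fun t => let '(k, l, m) := t in
            Cmult (q k l m) (cexpi (IZR k * a + IZR l * b + IZR m * g)))
         triples111).

(* sigma(1,1,1): nonnegative trigonometric polynomials of degree <= 1 in each
   variable.  Being nonnegative, such an f is real-valued; we represent it as a
   real function of (alpha, beta, gamma). *)
Definition sigma111 (f : R -> R -> R -> R) : Prop :=
  (exists q : Z -> Z -> Z -> C,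
      forall a b g, RtoC (f a b g) = trig_poly111 q a b g)
  /\ (forall a b g, 0 <= f a b g).

Definition extremal_in (U : (R -> R -> R -> R) -> Prop) (f : R -> R -> R -> R) : Prop :=
  U f /\
  forall g h, U g -> U h -> (forall a b c, f a b c = g a b c + h a b c) ->
    (exists lam, 0 <= lam /\ forall a b c, g a b c = lam * f a b c) /\
    (exists mu, 0 <= mu /\ forall a b c, h a b c = mu * f a b c).

Definition f_prop7 (a b g : R) : R :=
  Rpower 2 (3/2) - cos (a + b + g) - cos (- a + b + g) - cos (a - b + g)
  + cos (a + b - g).

(* Main.v *)
Require Import Defs.
From Stdlib Require Import Reals Lra List ZArith.
From Coquelicot Require Import Coquelicot.
Import ListNotations.
Open Scope R_scope.

Definition s := sqrt 2.
Lemma s_sq : s * s = 2.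
Proof. unfold s; apply sqrt_sqrt; lra. Qed.
Lemma s_pos : 0 < s.
Proof. unfold s; apply sqrt_lt_R0; lra. Qed.

Definition E (i : nat) (x : R) : R :=
  match i with O => 1 | 1%nat => s * cos x | _ => s * sin x end.
Definition T3 (F : nat -> R) : R := F 0%nat + F 1%nat + F 2%nat.
Definition G (w : nat -> nat -> nat -> R) (a b c : R) : R :=
  T3 (fun i => T3 (fun j => T3 (fun k => w i j k * E i a * E j b * E k c))).

Lemma min1d P Q R0 x0 : (forall x, 0 <= P + Q * cos x + R0 * sin x) ->
  P + Q * cos x0 + R0 * sin x0 = 0 -> - Q * sin x0 + R0 * cos x0 = 0.
Proof.
  intros H H0.
  set (phi := fun x => P + Q * cos x + R0 * sin x).
  assert (D : derivable_pt_lim phi x0 (- Q * sin x0 + R0 * cos x0)).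
  { apply is_derive_Reals. unfold phi. auto_derive; auto. ring. }
  pose (pr := exist (fun l => derivable_pt_abs phi x0 l) _ D : derivable_pt phi x0).
  rewrite <- (derive_pt_eq_0 phi x0 _ pr D).
  apply (deriv_minimum phi (x0 - 1) (x0 + 1)); try lra.
  intros x _ _. unfold phi. rewrite H0. apply H.
Qed.

Lemma min1dE P Q R0 x0 : (forall x, 0 <= P + Q * E 1 x + R0 * E 2 x) ->
  P + Q * E 1 x0 + R0 * E 2 x0 = 0 -> - Q * E 2 x0 + R0 * E 1 x0 = 0.
Proof.
  intros H H0. simpl in *.
  assert (- (Q * s) * sin x0 + (R0 * s) * cos x0 = 0).
  { apply (min1d P); intros; [ specialize (H x) | ]; nra. }
  nra.
Qed.

Definition Sa (w : nat -> nat -> nat -> R) (i : nat) b c := T3 (fun j => T3 (fun k => w i j k * E j b * E k c)).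
Definition Sb (w : nat -> nat -> nat -> R) (j : nat) a c := T3 (fun i => T3 (fun k => w i j k * E i a * E k c)).
Definition Sc (w : nat -> nat -> nat -> R) (k : nat) a b := T3 (fun i => T3 (fun j => w i j k * E i a * E j b)).

Lemma slice_a w a b c : G w a b c = Sa w 0 b c * E 0 a + Sa w 1 b c * E 1 a + Sa w 2 b c * E 2 a.
Proof. cbv [G Sa T3]. ring. Qed.
Lemma slice_b w a b c : G w a b c = Sb w 0 a c * E 0 b + Sb w 1 a c * E 1 b + Sb w 2 a c * E 2 b.
Proof. cbv [G Sb T3]. ring. Qed.
Lemma slice_c w a b c : G w a b c = Sc w 0 a b * E 0 c + Sc w 1 a b * E 1 c + Sc w 2 a b * E 2 c.
Proof. cbv [G Sc T3]. ring. Qed.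

Lemma zero_conds (w : nat -> nat -> nat -> R) a0 b0 c0 :
  (forall a b c, 0 <= G w a b c) -> G w a0 b0 c0 = 0 ->
  (- Sa w 1 b0 c0 * E 2 a0 + Sa w 2 b0 c0 * E 1 a0 = 0) /\
  (- Sb w 1 a0 c0 * E 2 b0 + Sb w 2 a0 c0 * E 1 b0 = 0) /\
  (- Sc w 1 a0 b0 * E 2 c0 + Sc w 2 a0 b0 * E 1 c0 = 0).
Proof.
  intros H H0. split; [|split].
  - apply (min1dE (Sa w 0 b0 c0)).
    + intro x. pose proof (H x b0 c0) as Hx. rewrite slice_a in Hx. simpl (E 0 x) in Hx. lra.
    + rewrite slice_a in H0. simpl (E 0 a0) in H0. lra.
  - apply (min1dE (Sb w 0 a0 c0)).
    + intro x. pose proof (H a0 x c0) as Hx. rewrite slice_b in Hx. simpl (E 0 x) in Hx. lra.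
    + rewrite slice_b in H0. simpl (E 0 b0) in H0. lra.
  - apply (min1dE (Sc w 0 a0 b0)).
    + intro x. pose proof (H a0 b0 x) as Hx. rewrite slice_c in Hx. simpl (E 0 x) in Hx. lra.
    + rewrite slice_c in H0. simpl (E 0 c0) in H0. lra.
Qed.

Lemma Rpow32 : Rpower 2 (3/2) = 2 * s.
Proof.
  replace (3/2) with (1 + /2) by field.
  rewrite Rpower_plus, Rpower_1, Rpower_sqrt by lra. reflexivity.
Qed.

Lemma fcos a b c : f_prop7 a b c = 2 * s - 2 * (cos a * cos (b + c) + sin a * sin (b - c)).
Proof.
  unfold f_prop7. rewrite Rpow32.
  repeat rewrite ?cos_plus, ?sin_plus, ?cos_minus, ?sin_minus, ?cos_neg, ?sin_neg.
  ring.
Qed.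

Definition KE a b c := E 1 a * (E 1 b * E 1 c - E 2 b * E 2 c) + E 2 a * (E 2 b * E 1 c - E 1 b * E 2 c).
Definition F0 a b c := 1 - / 4 * KE a b c.

Lemma fE a b c : f_prop7 a b c = 2 * s * F0 a b c.
Proof.
  rewrite fcos. unfold F0.
  assert (HK : KE a b c = (s * s) * s * (cos a * cos (b + c) + sin a * sin (b - c))).
  { unfold KE; simpl E. rewrite cos_plus, sin_minus. ring. }
  rewrite HK.
  set (X := cos a * cos (b + c) + sin a * sin (b - c)).
  transitivity (2 * s - (s * s) * (s * s) / 2 * X). { rewrite s_sq. field. }
  field.
Qed.

Lemma f_nonneg a b c : 0 <= f_prop7 a b c.
Proof.
  rewrite fcos.
  set (C := cos (b + c)). set (D := sin (b - c)).
  assert (HC : C * C <= 1) by (pose proof (sin2_cos2 (b + c)); unfold C, Rsqr in *; nra).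
  assert (HD : D * D <= 1) by (pose proof (sin2_cos2 (b - c)); unfold D, Rsqr in *; nra).
  pose proof (sin2_cos2 a) as Ha. unfold Rsqr in Ha.
  set (X := cos a * C + sin a * D).
  assert (HX : X * X <= 2).
  { assert (X * X + (cos a * D - sin a * C) * (cos a * D - sin a * C) = C * C + D * D).
    { unfold X. transitivity ((sin a * sin a + cos a * cos a) * (C * C + D * D)); [ring | rewrite Ha; ring]. }
    assert (0 <= (cos a * D - sin a * C) * (cos a * D - sin a * C)) by apply Rle_0_sqr.
    lra. }
  pose proof s_sq. pose proof s_pos. nra.
Qed.

Lemma E0 x : E 0 x = 1. Proof. reflexivity. Qed.
Lemma s_nz : s <> 0. Proof. pose proof s_pos; lra. Qed.
Lemma E1p1 : E 1 (PI/4) = 1. Proof. simpl. rewrite cos_PI4. unfold s. field. fold s. apply s_nz. Qed.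
Lemma E2p1 : E 2 (PI/4) = 1. Proof. simpl. rewrite sin_PI4. unfold s. field. fold s. apply s_nz. Qed.
Lemma E1p3 : E 1 (3*(PI/4)) = -1. Proof. simpl. rewrite cos_3PI4. unfold s. field. fold s. apply s_nz. Qed.
Lemma E2p3 : E 2 (3*(PI/4)) = 1. Proof. simpl. rewrite sin_3PI4. unfold s. field. fold s. apply s_nz. Qed.
Lemma E1m1 : E 1 (-(PI/4)) = 1. Proof. simpl. rewrite cos_neg, cos_PI4. unfold s. field. fold s. apply s_nz. Qed.
Lemma E2m1 : E 2 (-(PI/4)) = -1. Proof. simpl. rewrite sin_neg, sin_PI4. unfold s. field. fold s. apply s_nz. Qed.
Lemma E1m3 : E 1 (-(3*(PI/4))) = -1. Proof. simpl. rewrite cos_neg, cos_3PI4. unfold s. field. fold s. apply s_nz. Qed.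
Lemma E2m3 : E 2 (-(3*(PI/4))) = -1. Proof. simpl. rewrite sin_neg, sin_3PI4. unfold s. field. fold s. apply s_nz. Qed.

Lemma dominated (w : nat -> nat -> nat -> R) :
  (forall a b c, 0 <= G w a b c <= f_prop7 a b c) ->
  forall a b c, G w a b c = w 0%nat 0%nat 0%nat * F0 a b c.
Proof.
  intros H.
  assert (Hnn : forall a b c, 0 <= G w a b c) by (intros; apply H).
  assert (Hz0 : G w (PI/4) (PI/4) (-(PI/4)) = 0).
  { pose proof (H (PI/4) (PI/4) (-(PI/4))) as Hz. rewrite fE in Hz. unfold F0, KE in Hz.
    rewrite ?E1p1, ?E2p1, ?E1p3, ?E2p3, ?E1m1, ?E2m1, ?E1m3, ?E2m3 in Hz. lra. }
  destruct (zero_conds w (PI/4) (PI/4) (-(PI/4)) Hnn Hz0) as [Ha0 [Hb0 Hc0]].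
  assert (Hz1 : G w (-(3*(PI/4))) (PI/4) (3*(PI/4)) = 0).
  { pose proof (H (-(3*(PI/4))) (PI/4) (3*(PI/4))) as Hz. rewrite fE in Hz. unfold F0, KE in Hz.
    rewrite ?E1p1, ?E2p1, ?E1p3, ?E2p3, ?E1m1, ?E2m1, ?E1m3, ?E2m3 in Hz. lra. }
  destruct (zero_conds w (-(3*(PI/4))) (PI/4) (3*(PI/4)) Hnn Hz1) as [Ha1 [Hb1 Hc1]].
  assert (Hz2 : G w (3*(PI/4)) (3*(PI/4)) (PI/4) = 0).
  { pose proof (H (3*(PI/4)) (3*(PI/4)) (PI/4)) as Hz. rewrite fE in Hz. unfold F0, KE in Hz.
    rewrite ?E1p1, ?E2p1, ?E1p3, ?E2p3, ?E1m1, ?E2m1, ?E1m3, ?E2m3 in Hz. lra. }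
  destruct (zero_conds w (3*(PI/4)) (3*(PI/4)) (PI/4) Hnn Hz2) as [Ha2 [Hb2 Hc2]].
  assert (Hz3 : G w (-(PI/4)) (3*(PI/4)) (-(3*(PI/4))) = 0).
  { pose proof (H (-(PI/4)) (3*(PI/4)) (-(3*(PI/4)))) as Hz. rewrite fE in Hz. unfold F0, KE in Hz.
    rewrite ?E1p1, ?E2p1, ?E1p3, ?E2p3, ?E1m1, ?E2m1, ?E1m3, ?E2m3 in Hz. lra. }
  destruct (zero_conds w (-(PI/4)) (3*(PI/4)) (-(3*(PI/4))) Hnn Hz3) as [Ha3 [Hb3 Hc3]].
  assert (Hz4 : G w (-(PI/4)) (-(PI/4)) (PI/4) = 0).
  { pose proof (H (-(PI/4)) (-(PI/4)) (PI/4)) as Hz. rewrite fE in Hz. unfold F0, KE in Hz.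
    rewrite ?E1p1, ?E2p1, ?E1p3, ?E2p3, ?E1m1, ?E2m1, ?E1m3, ?E2m3 in Hz. lra. }
  destruct (zero_conds w (-(PI/4)) (-(PI/4)) (PI/4) Hnn Hz4) as [Ha4 [Hb4 Hc4]].
  assert (Hz5 : G w (3*(PI/4)) (-(PI/4)) (-(3*(PI/4))) = 0).
  { pose proof (H (3*(PI/4)) (-(PI/4)) (-(3*(PI/4)))) as Hz. rewrite fE in Hz. unfold F0, KE in Hz.
    rewrite ?E1p1, ?E2p1, ?E1p3, ?E2p3, ?E1m1, ?E2m1, ?E1m3, ?E2m3 in Hz. lra. }
  destruct (zero_conds w (3*(PI/4)) (-(PI/4)) (-(3*(PI/4))) Hnn Hz5) as [Ha5 [Hb5 Hc5]].
  assert (Hz6 : G w (-(3*(PI/4))) (-(3*(PI/4))) (-(PI/4)) = 0).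
  { pose proof (H (-(3*(PI/4))) (-(3*(PI/4))) (-(PI/4))) as Hz. rewrite fE in Hz. unfold F0, KE in Hz.
    rewrite ?E1p1, ?E2p1, ?E1p3, ?E2p3, ?E1m1, ?E2m1, ?E1m3, ?E2m3 in Hz. lra. }
  destruct (zero_conds w (-(3*(PI/4))) (-(3*(PI/4))) (-(PI/4)) Hnn Hz6) as [Ha6 [Hb6 Hc6]].
  assert (Hz7 : G w (PI/4) (-(3*(PI/4))) (3*(PI/4)) = 0).
  { pose proof (H (PI/4) (-(3*(PI/4))) (3*(PI/4))) as Hz. rewrite fE in Hz. unfold F0, KE in Hz.
    rewrite ?E1p1, ?E2p1, ?E1p3, ?E2p3, ?E1m1, ?E2m1, ?E1m3, ?E2m3 in Hz. lra. }
  destruct (zero_conds w (PI/4) (-(3*(PI/4))) (3*(PI/4)) Hnn Hz7) as [Ha7 [Hb7 Hc7]].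
  clear H Hnn. cbv [G Sa Sb Sc T3] in *.
  rewrite ?E0, ?E1p1, ?E2p1, ?E1p3, ?E2p3, ?E1m1, ?E2m1, ?E1m3, ?E2m3 in *.
  assert (W001 : w 0%nat 0%nat 1%nat = 0) by lra.
  assert (W002 : w 0%nat 0%nat 2%nat = 0) by lra.
  assert (W010 : w 0%nat 1%nat 0%nat = 0) by lra.
  assert (W011 : w 0%nat 1%nat 1%nat = 0) by lra.
  assert (W012 : w 0%nat 1%nat 2%nat = 0) by lra.
  assert (W020 : w 0%nat 2%nat 0%nat = 0) by lra.
  assert (W021 : w 0%nat 2%nat 1%nat = 0) by lra.
  assert (W022 : w 0%nat 2%nat 2%nat = 0) by lra.
  assert (W100 : w 1%nat 0%nat 0%nat = 0) by lra.
  assert (W101 : w 1%nat 0%nat 1%nat = 0) by lra.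
  assert (W102 : w 1%nat 0%nat 2%nat = 0) by lra.
  assert (W110 : w 1%nat 1%nat 0%nat = 0) by lra.
  assert (W111 : w 1%nat 1%nat 1%nat = - (w 0%nat 0%nat 0%nat / 4)) by lra.
  assert (W112 : w 1%nat 1%nat 2%nat = 0) by lra.
  assert (W120 : w 1%nat 2%nat 0%nat = 0) by lra.
  assert (W121 : w 1%nat 2%nat 1%nat = 0) by lra.
  assert (W122 : w 1%nat 2%nat 2%nat = w 0%nat 0%nat 0%nat / 4) by lra.
  assert (W200 : w 2%nat 0%nat 0%nat = 0) by lra.
  assert (W201 : w 2%nat 0%nat 1%nat = 0) by lra.
  assert (W202 : w 2%nat 0%nat 2%nat = 0) by lra.
  assert (W210 : w 2%nat 1%nat 0%nat = 0) by lra.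
  assert (W211 : w 2%nat 1%nat 1%nat = 0) by lra.
  assert (W212 : w 2%nat 1%nat 2%nat = w 0%nat 0%nat 0%nat / 4) by lra.
  assert (W220 : w 2%nat 2%nat 0%nat = 0) by lra.
  assert (W221 : w 2%nat 2%nat 1%nat = - (w 0%nat 0%nat 0%nat / 4)) by lra.
  assert (W222 : w 2%nat 2%nat 2%nat = 0) by lra.
  intros a b c. clear - W001 W002 W010 W011 W012 W020 W021 W022 W100 W101 W102 W110 W111 W112 W120 W121 W122 W200 W201 W202 W210 W211 W212 W220 W221 W222.
  rewrite W001, W002, W010, W011, W012, W020, W021, W022, W100, W101, W102, W110, W111, W112, W120, W121, W122, W200, W201, W202, W210, W211, W212, W220, W221, W222.
  unfold F0, KE. rewrite !E0. field.
Qed.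

Definition isG (F : R -> R -> R -> R) := exists w, forall a b c, F a b c = G w a b c.

Lemma isG_ext F F' : (forall a b c, F a b c = F' a b c) -> isG F' -> isG F.
Proof. intros H [w Hw]. exists w. intros. rewrite H. apply Hw. Qed.

Lemma isG_add F1 F2 : isG F1 -> isG F2 -> isG (fun a b c => F1 a b c + F2 a b c).
Proof.
  intros [w1 H1] [w2 H2]. exists (fun i j k => w1 i j k + w2 i j k).
  intros. rewrite H1, H2. cbv [G T3]. ring.
Qed.

Lemma isG_scal r F : isG F -> isG (fun a b c => r * F a b c).
Proof.
  intros [w1 H1]. exists (fun i j k => r * w1 i j k).
  intros. rewrite H1. cbv [G T3]. ring.
Qed.

Lemma isG_prod (u v x : nat -> R) :
  isG (fun a b c => T3 (fun i => u i * E i a) * T3 (fun j => v j * E j b) * T3 (fun k => x k * E k c)).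
Proof.
  exists (fun i j k => u i * v j * x k). intros. cbv [G T3]. ring.
Qed.

Definition okZ (k : Z) := k = (-1)%Z \/ k = 0%Z \/ k = 1%Z.

Lemma single k : okZ k ->
  (exists u, forall x, cos (IZR k * x) = T3 (fun i => u i * E i x)) /\
  (exists u, forall x, sin (IZR k * x) = T3 (fun i => u i * E i x)).
Proof.
  pose proof s_nz.
  intros [-> | [-> | ->]]; split.
  - exists (fun i => match i with 1%nat => / s | _ => 0 end). intros.
    replace (IZR (-1) * x) with (- x) by (simpl; lra). rewrite cos_neg. cbv [T3 E]. field. auto.
  - exists (fun i => match i with 2%nat => - / s | _ => 0 end). intros.
    replace (IZR (-1) * x) with (- x) by (simpl; lra). rewrite sin_neg. cbv [T3 E]. field. auto.
  - exists (fun i => match i with 0%nat => 1 | _ => 0 end). intros.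
    replace (IZR 0 * x) with 0 by (simpl; lra). rewrite cos_0. cbv [T3 E]. ring.
  - exists (fun i => 0). intros.
    replace (IZR 0 * x) with 0 by (simpl; lra). rewrite sin_0. cbv [T3 E]. ring.
  - exists (fun i => match i with 1%nat => / s | _ => 0 end). intros.
    replace (IZR 1 * x) with x by (simpl; lra). cbv [T3 E]. field. auto.
  - exists (fun i => match i with 2%nat => / s | _ => 0 end). intros.
    replace (IZR 1 * x) with x by (simpl; lra). cbv [T3 E]. field. auto.
Qed.

Lemma isG_cos_sin k l m : okZ k -> okZ l -> okZ m ->
  isG (fun a b c => cos (IZR k * a + IZR l * b + IZR m * c)) /\
  isG (fun a b c => sin (IZR k * a + IZR l * b + IZR m * c)).
Proof.
  intros hk hl hm.
  destruct (single k hk) as [[ck Hck] [sk Hsk]].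
  destruct (single l hl) as [[cl Hcl] [sl Hsl]].
  destruct (single m hm) as [[cm Hcm] [sm Hsm]].
  split.
  - eapply isG_ext.
    { intros a b c. rewrite cos_plus, cos_plus, sin_plus.
      rewrite Hck, Hsk, Hcl, Hsl, Hcm, Hsm. reflexivity. }
    cbv beta.
    apply isG_ext with (F' := fun a b c =>
      (T3 (fun i => ck i * E i a) * T3 (fun j => cl j * E j b) * T3 (fun k => cm k * E k c) +
      (-1) * (T3 (fun i => sk i * E i a) * T3 (fun j => sl j * E j b) * T3 (fun k => cm k * E k c))) +
      ((-1) * (T3 (fun i => sk i * E i a) * T3 (fun j => cl j * E j b) * T3 (fun k => sm k * E k c)) +
      (-1) * (T3 (fun i => ck i * E i a) * T3 (fun j => sl j * E j b) * T3 (fun k => sm k * E k c)))).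
    { intros. ring. }
    repeat apply isG_add; try apply isG_scal; apply isG_prod.
  - eapply isG_ext.
    { intros a b c. rewrite sin_plus, cos_plus, sin_plus.
      rewrite Hck, Hsk, Hcl, Hsl, Hcm, Hsm. reflexivity. }
    cbv beta.
    apply isG_ext with (F' := fun a b c =>
      (T3 (fun i => sk i * E i a) * T3 (fun j => cl j * E j b) * T3 (fun k => cm k * E k c) +
      T3 (fun i => ck i * E i a) * T3 (fun j => sl j * E j b) * T3 (fun k => cm k * E k c)) +
      (T3 (fun i => ck i * E i a) * T3 (fun j => cl j * E j b) * T3 (fun k => sm k * E k c) +
      (-1) * (T3 (fun i => sk i * E i a) * T3 (fun j => sl j * E j b) * T3 (fun k => sm k * E k c)))).
    { intros. ring. }
    repeat apply isG_add; try apply isG_scal; apply isG_prod.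
Qed.

Definition tp (L : list (Z * Z * Z)) (q : Z -> Z -> Z -> C) (a b g : R) : C :=
  fold_right Cplus (RtoC 0)
    (map (fun t => let '(k, l, m) := t in
            Cmult (q k l m) (cexpi (IZR k * a + IZR l * b + IZR m * g))) L).

Lemma isG_tp q L : (forall k l m, In (k, l, m) L -> okZ k /\ okZ l /\ okZ m) ->
  isG (fun a b c => fst (tp L q a b c)).
Proof.
  induction L as [| [[k l] m] L IH]; intros HL.
  - exists (fun _ _ _ => 0). intros. cbv [G T3]. simpl. ring.
  - destruct (HL k l m (or_introl eq_refl)) as [hk [hl hm]].
    destruct (isG_cos_sin k l m hk hl hm) as [Hc Hs].
    eapply isG_ext.
    { intros a b c. unfold tp. simpl. reflexivity. }
    apply isG_add.
    + apply isG_ext with (F' := fun a b c =>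
        fst (q k l m) * cos (IZR k * a + IZR l * b + IZR m * c) +
        (- snd (q k l m)) * sin (IZR k * a + IZR l * b + IZR m * c)).
      { intros. ring. }
      apply isG_add; apply isG_scal; assumption.
    + apply IH. intros. apply HL. right. assumption.
Qed.

Lemma sigma_G g : sigma111 g -> exists w, forall a b c, g a b c = G w a b c.
Proof.
  intros [[q Hq] _].
  assert (HG : isG (fun a b c => fst (tp triples111 q a b c))).
  { apply isG_tp. intros k l m Hin. unfold okZ.
    simpl in Hin.
    repeat (destruct Hin as [Hin | Hin];
      [ inversion Hin; subst; repeat split;
        first [ left; reflexivity | right; left; reflexivity | right; right; reflexivity ] | ]).
    contradiction. }
  destruct HG as [w Hw]. exists w. intros a b c.
  rewrite <- Hw. specialize (Hq a b c). change (tp triples111 q a b c) with (trig_poly111 q a b c). rewrite <- Hq. reflexivity.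
Qed.

Lemma dominated_mult g : sigma111 g -> (forall a b c, g a b c <= f_prop7 a b c) ->
  exists lam, 0 <= lam /\ forall a b c, g a b c = lam * f_prop7 a b c.
Proof.
  intros Hg Hle. destruct (sigma_G g Hg) as [w Hw].
  assert (Hd := dominated w).
  assert (Hb : forall a b c, 0 <= G w a b c <= f_prop7 a b c).
  { intros. rewrite <- Hw. split; [apply (proj2 Hg) | apply Hle]. }
  specialize (Hd Hb).
  exists (w 0%nat 0%nat 0%nat / (2 * s)).
  pose proof s_pos.
  assert (Hfe : forall a b c, g a b c = w 0%nat 0%nat 0%nat / (2 * s) * f_prop7 a b c).
  { intros. rewrite Hw, Hd, fE. field. apply s_nz. }
  split; [| exact Hfe].
  pose proof (proj2 Hg 0 0 0) as H0. rewrite Hfe in H0.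
  assert (Hf0 : 0 < f_prop7 0 0 0).
  { rewrite fcos. rewrite !Rplus_0_r, Rminus_0_r, cos_0, sin_0.
    assert (1 < s). { unfold s. rewrite <- sqrt_1. apply sqrt_lt_1; lra. }
    lra. }
  nra.
Qed.

Theorem proposition7 : extremal_in sigma111 f_prop7.
Proof.
  split.
  - split.
    + exists (fun k l m =>
        match k, l, m with
        | 0%Z, 0%Z, 0%Z => RtoC (Rpower 2 (3/2))
        | 1%Z, 1%Z, 1%Z | (-1)%Z, (-1)%Z, (-1)%Z => RtoC (-1/2)
        | (-1)%Z, 1%Z, 1%Z | 1%Z, (-1)%Z, (-1)%Z => RtoC (-1/2)
        | 1%Z, (-1)%Z, 1%Z | (-1)%Z, 1%Z, (-1)%Z => RtoC (-1/2)
        | 1%Z, 1%Z, (-1)%Z | (-1)%Z, (-1)%Z, 1%Z => RtoC (1/2)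
        | _, _, _ => RtoC 0
        end).
      intros a b c. unfold trig_poly111, triples111, freqs1, cexpi. simpl.
      unfold f_prop7, RtoC. rewrite Rpow32.
      assert (m1x : forall x, IZR (-1) * x = - x) by (intros; simpl; lra).
      rewrite ?m1x, ?Rmult_1_l, ?Rmult_0_l, ?Rplus_0_l, ?Rplus_0_r.
      rewrite ?cos_0, ?sin_0.
      repeat rewrite ?cos_plus, ?sin_plus, ?cos_minus, ?sin_minus, ?cos_neg, ?sin_neg.
      apply injective_projections; simpl; field.
    + intros; apply f_nonneg.
  - intros g h Hg Hh Hsum. split.
    + apply dominated_mult; auto.
      intros. rewrite Hsum. pose proof (proj2 Hh a b c). lra.
    + apply dominated_mult; auto.
      intros. rewrite Hsum. pose proof (proj2 Hg a b c). lra.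
Qed.
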